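(* Let $\mathcal C$ be a category and $n\ge0$. Suppose $f:A\to T$, $g:B\to T$ and $\varphi:A\to B$ are maps in $Z^n(\mathcal C)$ with $g\circ\varphi=f$. If $f$ and $g$ are degeneracy maps, then so is $\varphi$.
   Context: Notation: for $n\ge 0$, $[n]$ denotes $\{0,\dots,n-1\}$; $\Delta_+$ is the category of these finite total orders and order-preserving maps. For monotone $\psi:[n]\to[m]$ define $\hat\psi:[m+1]\to[n+1]$ by $\hat\psi(i)=\min(\{j\in[n]:\psi(j)\ge i\}\cup\{n\})$. Zigzags: in a category $\mathcal C$, a zigzag $X$ of length $n$ is a diagram $X(r_0)\xrightarrow{x_0} X(s_0)\xleftarrow{x'_0} X(r_1)\to\cdots\xrightarrow{x_{n-1}} X(s_{n-1})\xleftarrow{x'_{n-1}} X(r_n)$. A zigzag map $f:X\to Y$ (lengths $n$, $m$) consists of a monotone $f_s:[n]\to[m]$, regular slices $f(r_i):X(r_{\hat{f_s}(i)})\to Y(r_i)$ for $0\le i\le m$ and singular slices $f(s_j):X(s_j)\to Y(s_{f_s(j)})$ for $0\le j<n$, such that for each $0\le i<m$: if $f_s^{-1}(i)\neq\emptyset$ with least element $p$, greatest $q$, then $f(s_p)\circ x_p=y_i\circ f(r_i)$, $f(s_q)\circ x'_q=y'_i\circ f(r_{i+1})$, $f(s_j)\circ x'_j=f(s_{j+1})\circ x_{j+1}$ for $p\le j<q$; if $f_s^{-1}(i)=\emptyset$ then $y_i\circ f(r_i)=y'_i\circ f(r_{i+1})$. Composition: $(g\circ f)_s=g_s\circ f_s$,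 $(g\circ f)(s_j)=g(s_{f_s(j)})\circ f(s_j)$, $(g\circ f)(r_i)=g(r_i)\circ f(r_{\hat{g_s}(i)})$. This gives a category $Z(\mathcal C)$; $Z^0(\mathcal C)=\mathcal C$, $Z^n(\mathcal C)=Z(Z^{n-1}(\mathcal C))$. $\pi:Z(\mathcal C)\to\Delta_+$ sends a zigzag of length $n$ to $[n]$ and $f$ to $f_s$; $f$ is $\pi$-vertical if $\pi(f)$ is an identity; $f:x\to y$ is $\pi$-cocartesian if for every $h:x\to y'$ and $u:\pi(y)\to\pi(y')$ with $u\circ\pi(f)=\pi(h)$ there is a unique $v:y\to y'$ with $v\circ f=h$, $\pi(v)=u$. Degeneracy maps in $Z^n(\mathcal C)$ (by induction on $n$): in $Z^0(\mathcal C)$ the isomorphisms; for $n\ge1$ the maps generated under composition by simple degeneracy maps (the $\pi$-cocartesian maps $f$ with $\pi(f)$ a monomorphism of $\Delta_+$) and parallel degeneracy maps (the $\pi$-vertical maps whose regular and singular slices are all degeneracy maps in $Z^{n-1}(\mathcal C)$). *)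

(* Defs.v *)
From mathcomp Require Import all_boot.
Set Implicit Arguments. Unset Strict Implicit. Unset Printing Implicit Defensive.

Record category := Category {
  cob : Type;
  chom : cob -> cob -> Type;
  cid : forall a, chom a a;
  ccomp : forall a b d, chom b d -> chom a b -> chom a d;
  ccompA : forall a b e d (h : chom e d) (g : chom b e) (f : chom a b),
      ccomp h (ccomp g f) = ccomp (ccomp h g) f;
  ccomp1f : forall a b (f : chom a b), ccomp (cid b) f = f;
  ccompf1 : forall a b (f : chom a b), ccomp f (cid a) = f
}.
Arguments cid {c a}.
Arguments ccomp {c a b d}.

(* Category "data" used to build Z(C): morphisms are given by raw data
   [hom] together with a predicate [valid] singling out the genuine
   morphisms (those satisfying the zigzag-map equations). *)
Record PCat := PCatMk {
  ob : Type;
  hom : ob -> ob -> Type;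
  valid : forall a b, hom a b -> Prop;
  idm : forall a, hom a a;
  cmp : forall a b c, hom b c -> hom a b -> hom a c
}.
Arguments hom {p}.
Arguments valid {p a b}.
Arguments idm {p a}.
Arguments cmp {p a b c}.

Definition pcat_of (C : category) : PCat :=
  @PCatMk (cob C) (@chom C) (fun _ _ _ => True) (@cid C) (@ccomp C).

(* Packed arrows, used to compare morphisms between possibly different
   (but provably equal) objects: equality of packed arrows means equal
   source, equal target and equal morphism. *)
Definition arr (P : PCat) := {a : ob P & {b : ob P & hom a b}}.
Definition pk (P : PCat) (a b : ob P) (f : hom a b) : arr P :=
  existT _ a (existT _ b f).

(* The simplex category Delta_+ : objects [n] = 'I_n, monotone maps.    *)
Definition monotone (n m : nat) (psi : 'I_n -> 'I_m) : Prop :=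
  forall j j' : 'I_n, j <= j' -> psi j <= psi j'.

Definition delta_mono (n m : nat) (psi : 'I_n -> 'I_m) : Prop :=
  forall k (a b : 'I_k -> 'I_n), monotone a -> monotone b ->
    (forall x, psi (a x) = psi (b x)) -> forall x, a x = b x.

(* hat psi (i) = min ({ j in [n] | psi j >= i } U {n}) *)
Definition hat (n m : nat) (psi : 'I_n -> 'I_m) (i : 'I_m.+1) : 'I_n.+1 :=
  inord (find (fun j : 'I_n => i <= psi j) (enum 'I_n)).

(* Zigzags in P.  Index conventions: regular objects X(r_0..r_n) are
   indexed by 'I_n.+1, singular objects X(s_0..s_{n-1}) by 'I_n;
   x_i : X(r_i) -> X(s_i) and x'_i : X(r_{i+1}) -> X(s_i). *)
Section Zigzag.
Variable P : PCat.

Definition rlo n (i : 'I_n) : 'I_n.+1 := widen_ord (leqnSn n) i.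
Definition rhi n (i : 'I_n) : 'I_n.+1 := lift ord0 i.

Record zz := ZZ {
  zlen : nat;
  zreg : 'I_zlen.+1 -> ob P;
  zsing : 'I_zlen -> ob P;
  zfwd : forall i : 'I_zlen, hom (zreg (rlo i)) (zsing i);
  zbwd : forall i : 'I_zlen, hom (zreg (rhi i)) (zsing i);
  zfwd_valid : forall i, valid (zfwd i);
  zbwd_valid : forall i, valid (zbwd i)
}.
Arguments zreg : clear implicits.
Arguments zsing : clear implicits.
Arguments zfwd : clear implicits.
Arguments zbwd : clear implicits.

(* Raw data of a zigzag map f : X -> Y; [zr] records the index map
   hat(f_s) (forced to equal it by validity). *)
Record zmap (X Y : zz) := ZMap {
  zs : 'I_(zlen X) -> 'I_(zlen Y);
  zr : 'I_(zlen Y).+1 -> 'I_(zlen X).+1;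
  zrs : forall i : 'I_(zlen Y).+1, hom (zreg X (zr i)) (zreg Y i);
  zss : forall j : 'I_(zlen X), hom (zsing X j) (zsing Y (zs j))
}.

Definition zmap_valid (X Y : zz) (f : zmap X Y) : Prop :=
  [/\ monotone (zs f),
      (forall i, zr f i = hat (zs f) i),
      (forall i, valid (zrs f i)),
      (forall j, valid (zss f j)) &
      forall i : 'I_(zlen Y),
        (forall p, zs f p = i -> (forall j, zs f j = i -> p <= j) ->
           pk (cmp (zss f p) (zfwd X p)) = pk (cmp (zfwd Y i) (zrs f (rlo i))))
     /\
        (forall q, zs f q = i -> (forall j, zs f j = i -> j <= q) ->
           pk (cmp (zss f q) (zbwd X q)) = pk (cmp (zbwd Y i) (zrs f (rhi i))))
     /\
        (forall p q, zs f p = i -> (forall j, zs f j = i -> p <= j) ->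
           zs f q = i -> (forall j, zs f j = i -> j <= q) ->
           forall j j' : 'I_(zlen X), nat_of_ord j' = j.+1 -> p <= j -> j' <= q ->
           pk (cmp (zss f j) (zbwd X j)) = pk (cmp (zss f j') (zfwd X j')))
     /\
        ((forall j, zs f j <> i) ->
           pk (cmp (zfwd Y i) (zrs f (rlo i))) = pk (cmp (zbwd Y i) (zrs f (rhi i))))].

Definition zid (X : zz) : zmap X X :=
  @ZMap X X (fun j => j) (fun i => i) (fun i => idm) (fun j => idm).

Definition zcomp (X Y Z : zz) (g : zmap Y Z) (f : zmap X Y) : zmap X Z :=
  @ZMap X Z (fun j => zs g (zs f j)) (fun i => zr f (zr g i))
    (fun i => cmp (zrs g i) (zrs f (zr g i)))
    (fun j => cmp (zss g (zs f j)) (zss f j)).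

End Zigzag.

Definition Zc (P : PCat) : PCat :=
  @PCatMk (zz P) (@zmap P) (@zmap_valid P) (@zid P) (@zcomp P).

Fixpoint Zn (n : nat) (P : PCat) : PCat :=
  match n with 0 => P | k.+1 => Zc (Zn k P) end.

Definition pi_vertical (P : PCat) (X Y : zz P) (f : zmap X Y) : Prop :=
  zlen X = zlen Y /\ forall j, nat_of_ord (zs f j) = j.

Definition pi_cocartesian (P : PCat) (X Y : zz P) (f : zmap X Y) : Prop :=
  forall (Y' : zz P) (h : zmap X Y') (u : 'I_(zlen Y) -> 'I_(zlen Y')),
    zmap_valid h -> monotone u -> (forall j, u (zs f j) = zs h j) ->
    exists v : zmap Y Y',
      (zmap_valid v /\ zcomp v f = h /\ forall j, zs v j = u j) /\
      forall v' : zmap Y Y',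
        (zmap_valid v' /\ zcomp v' f = h /\ forall j, zs v' j = u j) -> v' = v.

Inductive comp_closure (P : PCat) (S : forall a b : ob P, hom a b -> Prop)
  : forall a b : ob P, hom a b -> Prop :=
| cc_base a b (f : hom a b) : S a b f -> comp_closure S f
| cc_comp a b c (f : hom a b) (g : hom b c) :
    comp_closure S f -> comp_closure S g -> comp_closure S (cmp g f).

Definition is_iso (P : PCat) (a b : ob P) (f : hom a b) : Prop :=
  valid f /\ exists g : hom b a, valid g /\ cmp g f = idm /\ cmp f g = idm.

Fixpoint degen (P : PCat) (n : nat) : forall a b : ob (Zn n P), hom a b -> Prop :=
  match n return forall a b : ob (Zn n P), hom a b -> Prop with
  | 0 => @is_iso P
  | k.+1 => @comp_closure (Zc (Zn k P))
      (fun (X Y : zz (Zn k P)) (f : zmap X Y) =>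
         (zmap_valid f /\ pi_cocartesian f /\ delta_mono (zs f))
      \/
         (zmap_valid f /\ pi_vertical f /\
          (forall i, degen (zrs f i)) /\ (forall j, degen (zss f j))))
  end.

(* Main.v *)
Require Import Defs.
From mathcomp Require Import all_boot.
From Stdlib Require Import ClassicalEpsilon FunctionalExtensionality Eqdep Classical.
Set Implicit Arguments. Unset Strict Implicit. Unset Printing Implicit Defensive.

Section Packed.
Variable P : PCat.

Lemma pk_inj (a b : ob P) (f g : hom a b) : pk f = pk g -> f = g.
Proof. move=> e; apply: inj_pair2; exact: (inj_pair2 _ _ _ _ _ e). Qed.

Lemma pk_tr (Q : forall a b : ob P, hom a b -> Prop) a b (f : hom a b) a' b' (g : hom a' b') :
  pk f = pk g -> Q a b f -> Q a' b' g.
Proof.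
move=> e; have e1 : a = a' by exact: (congr1 (@projT1 _ _) e).
subst a'; have {}e := inj_pair2 _ _ _ _ _ e.
have e2 : b = b' by exact: (congr1 (@projT1 _ _) e).
subst b'; by rewrite (inj_pair2 _ _ _ _ _ e).
Qed.

Lemma pk_src (a b a' b' : ob P) (f : hom a b) (g : hom a' b') : pk f = pk g -> a = a'.
Proof. by move=> e; exact: (congr1 (@projT1 _ _) e). Qed.
Lemma pk_tgt (a b a' b' : ob P) (f : hom a b) (g : hom a' b') : pk f = pk g -> b = b'.
Proof. move=> e; exact: (congr1 (fun x => projT1 (projT2 x)) e). Qed.

Definition pcm (g f : arr P) : arr P :=
  match excluded_middle_informative (projT1 (projT2 f) = projT1 g) with
  | left e => pk (cmp (projT2 (projT2 g))
         (eq_rect _ (fun x => hom (projT1 f) x) (projT2 (projT2 f)) _ e))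
  | right _ => g
  end.

Lemma pcm_pk (a b c : ob P) (g : hom b c) (f : hom a b) : pcm (pk g) (pk f) = pk (cmp g f).
Proof.
rewrite /pcm /=; case: excluded_middle_informative => // e.
by rewrite -eq_rect_eq.
Qed.

Lemma pk_cmp (a b c : ob P) (g : hom b c) (f : hom a b) a' b' c' (g' : hom b' c') (f' : hom a' b') :
  pk g = pk g' -> pk f = pk f' -> pk (cmp g f) = pk (cmp g' f').
Proof. by move=> e1 e2; rewrite -!pcm_pk e1 e2. Qed.

Definition tr (a b a' b' : ob P) (ea : a = a') (eb : b = b') (f : hom a b) : hom a' b' :=
  eq_rect _ (fun y => hom a' y) (eq_rect _ (fun x => hom x b) f _ ea) _ eb.
Lemma pk_trE (a b a' b' : ob P) (ea : a = a') (eb : b = b') (f : hom a b) : pk (tr ea eb f) = pk f.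
Proof. by subst. Qed.

Lemma ex_typed (a b : ob P) (x : arr P) a' b' (g : hom a' b') : x = pk g -> a = a' -> b = b' ->
  exists f : hom a b, pk f = x /\ (valid g -> valid f).
Proof.
move=> -> e1 e2; subst; exists g; split=> //.
Qed.

End Packed.

Lemma dchoice (I : Type) (T : I -> Type) (R : forall i, T i -> Prop) :
  (forall i, exists x, R i x) -> exists f : forall i, T i, forall i, R i (f i).
Proof.
move=> H; exists (fun i => proj1_sig (constructive_indefinite_description _ (H i))).
move=> i; exact: proj2_sig (constructive_indefinite_description _ (H i)).
Qed.

Section Hat.
Variables n m : nat.
Implicit Types psi : 'I_n -> 'I_m.

Lemma find_le (a : pred 'I_n) : find a (enum 'I_n) <= n.
Proof. by have := find_size a (enum 'I_n); rewrite size_enum_ord. Qed.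

Lemma hat_val psi i : (hat psi i : nat) = find (fun j : 'I_n => i <= psi j) (enum 'I_n).
Proof. by rewrite /hat inordK // ltnS find_le. Qed.

Lemma hat_le psi i : (hat psi i : nat) <= n.
Proof. by rewrite hat_val find_le. Qed.

Lemma hatP psi (Hm : monotone psi) i (j : 'I_n) : (j < hat psi i) = (psi j < i).
Proof.
rewrite hat_val.
case: (ltnP j (find _ _)) => Hj.
  have := before_find j Hj; rewrite nth_ord_enum.
  by move=> /negbT; rewrite -ltnNge => ->.
have Hf : find (fun j0 : 'I_n => i <= psi j0) (enum 'I_n) < n.
  by apply: leq_ltn_trans Hj (ltn_ord j).
have Hh : has (fun j0 : 'I_n => i <= psi j0) (enum 'I_n).
  by rewrite has_find size_enum_ord.
have := nth_find j Hh.
have -> : find (fun j0 : 'I_n => i <= psi j0) (enum 'I_n) = nat_of_ord (Ordinal Hf) by [].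
rewrite nth_ord_enum => Hk. apply/esym/negbTE; rewrite -leqNgt.
apply: leq_trans Hk _; apply: (Hm (Ordinal Hf) j); exact Hj.
Qed.

End Hat.

Lemma ord_eq_lt n (x y : 'I_n.+1) : (forall j : 'I_n, (j < x) = (j < y)) -> x = y.
Proof.
move=> H; apply: val_inj => /=; apply/eqP; rewrite eqn_leq.
apply/andP; split; rewrite leqNgt; apply/negP => Hlt.
- have Hy : y < n by rewrite -ltnS; apply: leq_trans Hlt (ltn_ord x).
  by have := H (Ordinal Hy); rewrite /= Hlt ltnn.
- have Hx : x < n by rewrite -ltnS; apply: leq_trans Hlt (ltn_ord y).
  by have := H (Ordinal Hx); rewrite /= Hlt ltnn.
Qed.

Lemma nat_eq_lt n (x y : nat) : x <= n -> y <= n ->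
  (forall j : 'I_n, (j < x) = (j < y)) -> x = y.
Proof.
move=> Hx Hy H; apply/eqP; rewrite eqn_leq.
apply/andP; split; rewrite leqNgt; apply/negP => Hlt.
- have Hy' : y < n by apply: leq_trans Hlt Hx.
  by have := H (Ordinal Hy'); rewrite /= Hlt ltnn.
- have Hx' : x < n by apply: leq_trans Hlt Hy.
  by have := H (Ordinal Hx'); rewrite /= Hlt ltnn.
Qed.

Section Hat2.
Variables n m : nat.
Implicit Types psi : 'I_n -> 'I_m.

Lemma hat_ext psi psi' i : (forall j, psi j = psi' j) -> hat psi i = hat psi' i.
Proof. by move=> H; rewrite /hat; congr inord; apply: eq_find => j; rewrite H. Qed.

Lemma hat_mono psi (Hm : monotone psi) (i i' : 'I_m.+1) : i <= i' -> hat psi i <= hat psi i'.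
Proof.
move=> Hii; rewrite leqNgt; apply/negP => Hlt.
have Hj : hat psi i' < n by apply: leq_trans Hlt (hat_le _ _).
have := hatP Hm i (Ordinal Hj); rewrite /= Hlt => /esym Hp.
have := hatP Hm i' (Ordinal Hj); rewrite /= ltnn.
by rewrite (leq_trans Hp Hii).
Qed.

Lemma fibreP psi (Hm : monotone psi) (j : 'I_n) (l : 'I_m) :
  (psi j == l) = (hat psi (rlo l) <= j) && (j < hat psi (rhi l)).
Proof.
rewrite leqNgt !hatP //= ltnS -leqNgt.
by rewrite -val_eqE /= eqn_leq andbC.
Qed.

Lemma mono_strict psi (Hm : monotone psi) (Hi : injective psi) (j j' : 'I_n) :
  j < j' -> psi j < psi j'.
Proof.
move=> H; rewrite ltn_neqAle (Hm j j' (ltnW H)) andbT.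
apply/negP => /eqP /val_inj /Hi e; by rewrite e ltnn in H.
Qed.

Lemma hat_inj_lo psi (Hm : monotone psi) (Hi : injective psi) (j : 'I_n) :
  (hat psi (rlo (psi j)) : nat) = j.
Proof.
apply: (@nat_eq_lt n); [exact: hat_le | exact: ltnW (ltn_ord j) |].
move=> j'; rewrite hatP //=.
case: (ltngtP j' j) => H.
- by rewrite (mono_strict Hm Hi H).
- by apply/negbTE; rewrite -leqNgt (Hm j j' (ltnW H)).
- have -> : j' = j by apply: val_inj.
  by rewrite ltnn.
Qed.

Lemma hat_inj_hi psi (Hm : monotone psi) (Hi : injective psi) (j : 'I_n) :
  (hat psi (rhi (psi j)) : nat) = j.+1.
Proof.
apply: (@nat_eq_lt n); [exact: hat_le | exact: ltn_ord j |].
move=> j'; rewrite hatP //= !ltnS.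
case: (leqP j' j) => H; first by rewrite (Hm j' j H).
by apply/negbTE; rewrite -ltnNge (mono_strict Hm Hi H).
Qed.

Lemma hat_top psi (Hm : monotone psi) : (hat psi ord_max : nat) = n.
Proof.
apply: (@nat_eq_lt n); [exact: hat_le | by [] |].
by move=> j'; rewrite hatP //= !ltn_ord.
Qed.

Lemma hat_surj psi (Hm : monotone psi) (Hi : injective psi) (c : 'I_n.+1) :
  exists i : 'I_m.+1, hat psi i = c.
Proof.
case: (ltnP c n) => Hc.
  exists (rlo (psi (Ordinal Hc))); apply: val_inj => /=; by rewrite hat_inj_lo.
exists ord_max; apply: val_inj => /=; rewrite hat_top //.
by apply/eqP; rewrite eqn_leq Hc -ltnS ltn_ord.
Qed.

End Hat2.

Lemma hat_comp n m k (psi : 'I_n -> 'I_m) (u : 'I_m -> 'I_k) (i : 'I_k.+1) :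
  monotone psi -> monotone u ->
  hat psi (hat u i) = hat (fun j => u (psi j)) i.
Proof.
move=> Hp Hu; have Hc : monotone (fun j => u (psi j)).
  by move=> j j' H; apply: Hu; apply: Hp.
apply: ord_eq_lt => j; rewrite (hatP Hp) (hatP Hc).
by rewrite (hatP Hu).
Qed.

Lemma rhiE n (j : 'I_n) : (rhi j : nat) = j.+1.
Proof. by rewrite /rhi /= /bump leq0n. Qed.
Lemma rloE n (j : 'I_n) : (rlo j : nat) = j.
Proof. by []. Qed.

Lemma ordE n (x y : 'I_n) : nat_of_ord x = nat_of_ord y -> x = y.
Proof. exact: val_inj. Qed.

Record good (P : PCat) : Prop := Good {
  g_assoc : forall (a b c d : ob P) (h : hom c d) (g : hom b c) (f : hom a b),
      cmp h (cmp g f) = cmp (cmp h g) f;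
  g_idl : forall (a b : ob P) (f : hom a b), cmp idm f = f;
  g_idr : forall (a b : ob P) (f : hom a b), cmp f idm = f;
  g_vcmp : forall (a b c : ob P) (g : hom b c) (f : hom a b),
      valid f -> valid g -> valid (cmp g f);
  g_vid : forall a : ob P, valid (@idm P a) }.

Lemma zmap_ext (P : PCat) (X Y : zz P) (f g : zmap X Y) :
  (forall j, zs f j = zs g j) -> (forall i, zr f i = zr g i) ->
  (forall i, pk (zrs f i) = pk (zrs g i)) -> (forall j, pk (zss f j) = pk (zss g j)) ->
  f = g.
Proof.
case: f => sf rf rsf ssf; case: g => sg rg rsg ssg /= Hs Hr Hrs Hss.
have es : sf = sg by apply: functional_extensionality.
have er : rf = rg by apply: functional_extensionality.
subst sg rg.
have -> : rsf = rsg.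
  apply: functional_extensionality_dep => i; exact: pk_inj (Hrs i).
have -> // : ssf = ssg.
apply: functional_extensionality_dep => j; exact: pk_inj (Hss j).
Qed.

Section Theta.
Variable P : PCat.
Variables X Y : zz P.
Variable f : zmap X Y.

Definition prevalid := [/\ monotone (zs f), (forall i, zr f i = hat (zs f) i),
   (forall i, valid (zrs f i)) & (forall j, valid (zss f j))].

Definition theta (k : 'I_(zlen X).+1) (l : 'I_(zlen Y)) : arr P :=
  let dflt := if k == zr f (rlo l) then pk (cmp (zfwd l) (zrs f (rlo l)))
              else pk (cmp (zbwd l) (zrs f (rhi l))) in
  match (insub (val k) : option 'I_(zlen X)) with
  | Some j => if zs f j == l then pk (cmp (zss f j) (zfwd j)) else dflt
  | None => dflt end.

Definition descr (k : 'I_(zlen X).+1) (l : 'I_(zlen Y)) (a : arr P) : Prop :=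
 [/\ (k = zr f (rlo l) -> pk (cmp (zfwd l) (zrs f (rlo l))) = a),
     (k = zr f (rhi l) -> pk (cmp (zbwd l) (zrs f (rhi l))) = a),
     (forall j, zs f j = l -> val k = val j -> pk (cmp (zss f j) (zfwd j)) = a) &
     (forall j, zs f j = l -> val k = j.+1 -> pk (cmp (zss f j) (zbwd j)) = a)].

Definition inrange (k : 'I_(zlen X).+1) (l : 'I_(zlen Y)) :=
  (zr f (rlo l) <= k) && (k <= zr f (rhi l)).

Hypothesis Hpv : prevalid.

Lemma fib (j : 'I_(zlen X)) l :
  (zs f j == l) = (zr f (rlo l) <= j) && (j < zr f (rhi l)).
Proof. case: Hpv => Hm Hr _ _; by rewrite !Hr fibreP. Qed.

Lemma fibE (j : 'I_(zlen X)) l :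
  zs f j = l <-> (zr f (rlo l) <= j) && (j < zr f (rhi l)).
Proof. by rewrite -fib; split => [->|/eqP]. Qed.

Lemma zr_mono (i i' : 'I_(zlen Y).+1) : i <= i' -> zr f i <= zr f i'.
Proof. case: Hpv => Hm Hr _ _; rewrite !Hr; exact: hat_mono. Qed.

Lemma zr_lohi l : zr f (rlo l) <= zr f (rhi l).
Proof. apply: zr_mono; by rewrite /= leqnSn. Qed.

Lemma zr_le i : (zr f i : nat) <= zlen X.
Proof. by rewrite -ltnS ltn_ord. Qed.

Lemma least_lo l (p : 'I_(zlen X)) : zs f p = l -> (forall j, zs f j = l -> p <= j) ->
  (zr f (rlo l) : nat) = p.
Proof.
move=> Hp Hl; have /andP [H1 H2] := (fibE p l).1 Hp.
apply/eqP; rewrite eqn_leq H1 /= leqNgt; apply/negP => Hlt.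
have Hn : zr f (rlo l) < zlen X by apply: ltn_trans Hlt (ltn_ord p).
suff: p <= Ordinal Hn by rewrite /= leqNgt Hlt.
apply: Hl; apply/fibE => /=.
by rewrite leqnn (leq_ltn_trans (ltnW Hlt) H2).
Qed.

Lemma greatest_hi l (q : 'I_(zlen X)) : zs f q = l -> (forall j, zs f j = l -> j <= q) ->
  (zr f (rhi l) : nat) = q.+1.
Proof.
move=> Hq Hg; have /andP [H1 H2] := (fibE q l).1 Hq.
apply/eqP; rewrite eqn_leq H2 andbT leqNgt; apply/negP => Hlt.
have Hn : q.+1 < zlen X by apply: leq_trans Hlt (zr_le _).
suff: Ordinal Hn <= q by rewrite /= ltnn.
apply: Hg; apply/fibE => /=.
by rewrite Hlt (leq_trans H1 (leqnSn _)).
Qed.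

Lemma empty_lohi l : (forall j, zs f j <> l) -> zr f (rlo l) = zr f (rhi l).
Proof.
move=> He; apply: val_inj; apply/eqP; rewrite eqn_leq zr_lohi /= leqNgt.
apply/negP => Hlt.
have Hn : zr f (rlo l) < zlen X by apply: leq_trans Hlt (zr_le _).
by apply: (He (Ordinal Hn)); apply/fibE; rewrite /= leqnn Hlt.
Qed.

Lemma valid_of_descr :
  (forall l k, inrange k l -> exists a, descr k l a) -> zmap_valid f.
Proof.
move=> H; case: (Hpv) => Hm Hr Hvr Hvs; split=> // l.
split; [|split; [|split]].
- move=> p Hp Hl; have Hlo := least_lo Hp Hl.
  have /andP [_ H2] := (fibE p l).1 Hp.
  have [a [Ha _ Hc _]] := H l (zr f (rlo l)) (introT andP (conj (leqnn _) (zr_lohi l))).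
  by rewrite Ha // (Hc p).
- move=> q Hq Hg; have Hhi := greatest_hi Hq Hg.
  have [a [_ Hb _ Hd]] := H l (zr f (rhi l)) (introT andP (conj (zr_lohi l) (leqnn _))).
  by rewrite Hb // (Hd q).
- move=> p q Hp Hl Hq Hg j j' Hjj Hpj Hjq.
  have Hlo := least_lo Hp Hl; have Hhi := greatest_hi Hq Hg.
  have Hj : zs f j = l.
    apply/fibE; rewrite Hlo Hpj /= Hhi ltnS (leq_trans _ Hjq) //.
    by rewrite Hjj leqnSn.
  have Hj' : zs f j' = l.
    apply/fibE; rewrite Hlo Hhi ltnS Hjq andbT Hjj (leq_trans Hpj) //.
  have Hrg : inrange (rhi j) l.
    by rewrite /inrange Hlo Hhi rhiE (leq_trans Hpj (leqnSn _)) /= -Hjj (leq_trans Hjq (leqnSn _)).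
  have [a [_ _ Hc Hd]] := H l (rhi j) Hrg.
  by rewrite (Hd j) // ?rhiE // (Hc j') // rhiE Hjj.
- move=> He; have E := empty_lohi He.
  have [a [Ha Hb _ _]] := H l (zr f (rlo l)) (introT andP (conj (leqnn _) (zr_lohi l))).
  by rewrite Ha // Hb.
Qed.

Lemma least_of l (p : 'I_(zlen X)) : (p : nat) = zr f (rlo l) ->
  forall j, zs f j = l -> p <= j.
Proof. by move=> -> j /fibE /andP []. Qed.

Lemma greatest_of l (q : 'I_(zlen X)) : zr f (rhi l) <= q.+1 ->
  forall j, zs f j = l -> j <= q.
Proof. move=> H j /fibE /andP [_ H2]; by rewrite -ltnS (leq_trans H2 H). Qed.

Lemma descr_unique k l a b : inrange k l -> descr k l a -> descr k l b -> a = b.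
Proof.
move=> /andP [H1 H2] [Aa Ab Ac Ad] [Ba Bb Bc Bd].
case: (eqVneq k (zr f (rlo l))) => E1; first by rewrite -(Aa E1) (Ba E1).
case: (eqVneq k (zr f (rhi l))) => E2; first by rewrite -(Ab E2) (Bb E2).
have L1 : zr f (rlo l) < k by rewrite ltn_neqAle H1 andbT eq_sym; apply/eqP => /val_inj; apply/eqP.
have L2 : k < zr f (rhi l) by rewrite ltn_neqAle H2 andbT; apply/eqP => /val_inj; apply/eqP.
have Hk : k < zlen X by apply: leq_trans L2 (zr_le _).
have Hj : zs f (Ordinal Hk) = l by apply/fibE; rewrite /= L2 (ltnW L1).
by rewrite -(Ac _ Hj) // (Bc _ Hj).
Qed.

End Theta.

Lemma prevalid_of_valid (P : PCat) (X Y : zz P) (f : zmap X Y) : zmap_valid f -> prevalid f.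
Proof. by case. Qed.

Section Theta2.
Variable P : PCat.
Variables X Y : zz P.
Variable f : zmap X Y.
Hypothesis Hv : zmap_valid f.
Let Hpv := prevalid_of_valid Hv.

Lemma descr_theta k l : inrange f k l -> descr f k l (theta f k l).
Proof.
move=> /andP [R1 R2].
case: (Hv) => Hm Hr Hvr Hvs Hcond; have [Hpc [Hqc [Hch He]]] := Hcond l.
pose dflt := if k == zr f (rlo l) then pk (cmp (zfwd l) (zrs f (rlo l)))
              else pk (cmp (zbwd l) (zrs f (rhi l))).
have Dhi : k = zr f (rhi l) -> dflt = pk (cmp (zbwd l) (zrs f (rhi l))).
  move=> Ek; rewrite /dflt; case: eqP => // E'.
  have E2 : zr f (rlo l) = zr f (rhi l) by rewrite -E' Ek.
  apply: He => j Hj; have /andP [J1 J2] := (fibE Hpv j l).1 Hj.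
  by move: (leq_ltn_trans J1 J2); rewrite E2 ltnn.
have Eth : theta f k l = match (insub (val k) : option 'I_(zlen X)) with
  | Some j => if zs f j == l then pk (cmp (zss f j) (zfwd j)) else dflt
  | None => dflt end by [].
split.
- move=> Ek; rewrite Eth; case: insubP => [j _ Hjk | _]; last by rewrite /dflt Ek eqxx.
  case: ifP => [/eqP Hjl | _]; last by rewrite /dflt Ek eqxx.
  apply/esym; apply: Hpc => //; apply: (least_of Hpv) => //; by rewrite Hjk Ek.
- move=> Ek; rewrite Eth; case: insubP => [j _ Hjk | _]; last by rewrite Dhi.
  case: ifP => [/eqP Hjl | _]; last by rewrite Dhi.
  have /andP [_ J2] := (fibE Hpv j l).1 Hjl.
  by move: J2; rewrite Hjk Ek ltnn.
- move=> j Hjl Hk; rewrite Eth; case: insubP => [j' _ Hjk | ].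
    have -> : j' = j by apply: val_inj; rewrite Hjk Hk.
    by have -> : (zs f j == l) = true by apply/eqP.
  by rewrite Hk ltn_ord.
- move=> j Hjl Hk; rewrite Eth; case: insubP => [j' _ Hjk | Hn].
    case: ifP => [/eqP Hjl' | Hjl'].
      have /andP [J1 J2] := (fibE Hpv j l).1 Hjl.
      have /andP [J1' J2'] := (fibE Hpv j' l).1 Hjl'.
      have Hp : zr f (rlo l) < zlen X by apply: leq_ltn_trans J1 (ltn_ord j).
      have Hpos : 0 < zr f (rhi l) by apply: leq_ltn_trans _ J2.
      have Hq : (zr f (rhi l)).-1 < zlen X by rewrite -ltnS prednK // ltnS zr_le.
      have Hql : (Ordinal Hq : nat).+1 = zr f (rhi l) by rewrite /= prednK.
      apply: (Hch (Ordinal Hp) (Ordinal Hq)) => //.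
      + by apply/(fibE Hpv); rewrite /= leqnn (leq_ltn_trans J1 J2).
      + by move=> j0; apply: (least_of Hpv).
      + apply/(fibE Hpv); rewrite /= ltn_predL Hpos andbT.
        by rewrite -ltnS prednK // (leq_ltn_trans J1 J2).
      + by move=> j0; apply: (greatest_of Hpv); rewrite Hql.
      + by rewrite Hjk Hk.
      + by rewrite -ltnS Hql.
    have Ek : k != zr f (rlo l).
      apply/eqP => E; have /andP [J1 _] := (fibE Hpv j l).1 Hjl.
      by move: J1; rewrite -E Hk ltnn.
    rewrite /dflt (negbTE Ek); apply: Hqc => //.
    apply: (greatest_of Hpv); rewrite leqNgt; apply/negP => Hlt.
    have /andP [J1 _] := (fibE Hpv j l).1 Hjl.
    have : zs f j' == l by rewrite (fib Hpv) Hjk Hk Hlt andbT (leq_trans J1 (leqnSn _)).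
    by rewrite Hjl'.
  have Ek : k != zr f (rlo l).
    apply/eqP => E; have /andP [J1 _] := (fibE Hpv j l).1 Hjl.
    by move: J1; rewrite -E Hk ltnn.
  rewrite /dflt (negbTE Ek); apply: Hqc => //.
  apply: (greatest_of Hpv); apply: leq_trans (zr_le _ _) _; by rewrite -Hk leqNgt.
Qed.

End Theta2.

Lemma crossing (F : nat -> nat) k a b : a < b -> F a < k -> k <= F b ->
  exists c, [/\ a <= c, c < b, F c < k & k <= F c.+1].
Proof.
elim: b => // b IH; rewrite ltnS leq_eqVlt => /orP [/eqP <- | Hab] Ha Hb.
  by exists a; rewrite leqnn ltnSn.
case: (ltnP (F b) k) => Hk.
  by exists b; rewrite (ltnW Hab) ltnSn.
have [c [H1 H2 H3 H4]] := IH Hab Ha Hk.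
by exists c; rewrite H1 (ltn_trans H2 (ltnSn _)).
Qed.

Section Comp.
Variable P : PCat.
Hypothesis HP : good P.
Variables X Y Z : zz P.
Variable f : zmap X Y.
Variable g : zmap Y Z.
Hypothesis Hf : zmap_valid f.
Hypothesis Hg : zmap_valid g.
Let Pf := prevalid_of_valid Hf.
Let Pg := prevalid_of_valid Hg.

Lemma asc (a b c d : ob P) (x : hom c d) (y : hom b c) (z : hom a b) :
  pk (cmp x (cmp y z)) = pcm (pk (cmp x y)) (pk z).
Proof. by rewrite pcm_pk (g_assoc HP). Qed.
Lemma asc' (a b c d : ob P) (x : hom c d) (y : hom b c) (z : hom a b) :
  pk (cmp (cmp x y) z) = pcm (pk x) (pk (cmp y z)).
Proof. by rewrite pcm_pk (g_assoc HP). Qed.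

Lemma prevalid_comp : prevalid (zcomp g f).
Proof.
case: Pf => Hm Hr Hvr Hvs; case: Pg => Hm' Hr' Hvr' Hvs'.
split => /=.
- by move=> j j' H; apply: Hm'; apply: Hm.
- by move=> i; rewrite Hr Hr' hat_comp.
- by move=> i; apply: (g_vcmp HP).
- by move=> j; apply: (g_vcmp HP).
Qed.

Lemma ordS_ex n (c : 'I_n.+1) : c < n -> exists l : 'I_n, rlo l = c.
Proof. by move=> H; exists (Ordinal H); apply: val_inj. Qed.

Lemma run_step (i : 'I_(zlen Z)) (l : 'I_(zlen Y)) :
  zs g l = i -> zr f (rlo l) = zr f (rhi l) ->
  pcm (theta g (rlo l) i) (pk (zrs f (rlo l))) = pcm (theta g (rhi l) i) (pk (zrs f (rhi l))).
Proof.
move=> Hl E.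
have /andP [G1 G2] := (fibE Pg l i).1 Hl.
have R1 : inrange g (rlo l) i by rewrite /inrange G1 /= ltnW.
have R2 : inrange g (rhi l) i by rewrite /inrange rhiE G2 andbT (leq_trans G1).
have [_ _ Dc _] := descr_theta Hg R1.
have [_ _ _ Dd] := descr_theta Hg R2.
rewrite -(Dc l Hl) // -(Dd l Hl) ?rhiE // !pcm_pk -!(g_assoc HP).
rewrite -!pcm_pk; congr pcm.
have Rf : inrange f (zr f (rlo l)) l by rewrite /inrange leqnn E leqnn.
have [Da Db _ _] := descr_theta Hf Rf.
by rewrite !pcm_pk (Da erefl) (Db E).
Qed.

Lemma run (i : 'I_(zlen Z)) (c1 c2 : 'I_(zlen Y).+1) :
  zr g (rlo i) <= c1 -> c1 <= c2 -> c2 <= zr g (rhi i) -> zr f c1 = zr f c2 ->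
  pcm (theta g c1 i) (pk (zrs f c1)) = pcm (theta g c2 i) (pk (zrs f c2)).
Proof.
move=> H1 H12 H2 E.
have [d Hd] : exists d, (c2 : nat) = c1 + d by exists (c2 - c1); rewrite subnKC.
elim: d c2 H12 H2 E Hd => [|d IH] c2 H12 H2 E Hd.
  by have -> : c2 = c1 by apply: val_inj => /=; rewrite Hd addn0.
have Hc : c1 + d < zlen Y by rewrite -ltnS -addnS -Hd ltn_ord.
pose l : 'I_(zlen Y) := Ordinal Hc.
have Ehi : rhi l = c2 by apply: val_inj; rewrite /= /bump leq0n Hd addnS.
have Elo : (rlo l : nat) = c1 + d by [].
have M1 : zr f c1 <= zr f (rlo l) by apply: (zr_mono Pf); rewrite Elo leq_addr.
have M2 : zr f (rlo l) <= zr f c2 by rewrite -Ehi; exact: (zr_lohi Pf).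
have E1 : zr f c1 = zr f (rlo l).
  by apply: val_inj; apply/eqP; rewrite eqn_leq M1 E M2.
have L1 : c1 <= rlo l by rewrite Elo leq_addr.
have L2 : rlo l <= zr g (rhi i).
  apply: leq_trans H2; rewrite -Ehi rhiE Elo; exact: leqnSn.
rewrite (IH (rlo l) L1 L2 E1 Elo) -Ehi.
apply: run_step; last by rewrite -E1 Ehi.
apply/(fibE Pg); apply/andP; split; first exact: (leq_trans H1 L1).
by move: H2; rewrite -Ehi rhiE.
Qed.

Lemma descr_case1 i (k : 'I_(zlen X).+1) (c : 'I_(zlen Y).+1) :
  zr g (rlo i) <= c -> c <= zr g (rhi i) -> zr f c = k ->
  descr (zcomp g f) k i (pcm (theta g c i) (pk (zrs f c))).
Proof.
move=> C1 C2 Ec.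
have Ra : inrange g (zr g (rlo i)) i by rewrite /inrange leqnn (zr_lohi Pg).
have Rb : inrange g (zr g (rhi i)) i by rewrite /inrange leqnn (zr_lohi Pg).
split => /=.
- move=> Ek; rewrite asc.
  have [Da _ _ _] := descr_theta Hg Ra; rewrite (Da erefl).
  by apply: run => //; rewrite Ec Ek.
- move=> Ek; rewrite asc.
  have [_ Db _ _] := descr_theta Hg Rb; rewrite (Db erefl).
  by apply/esym; apply: run => //; rewrite Ec Ek.
- move=> j Hj Hk; set l := zs f j in Hj *.
  have /andP [F1 F2] := (fibE Pf j l).1 erefl.
  have /andP [G1 G2] := (fibE Pg l i).1 Hj.
  have Cl : c <= rlo l.
    rewrite leqNgt; apply/negP => Hlt.
    have : zr f (rhi l) <= zr f c by apply: (zr_mono Pf); rewrite rhiE.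
    by rewrite Ec Hk leqNgt F2.
  have El : zr f c = zr f (rlo l).
    apply: val_inj; apply/eqP; rewrite eqn_leq (zr_mono Pf Cl) /= Ec Hk.
    exact: F1.
  rewrite (run C1 Cl _ El); last by rewrite /= ltnW.
  have Rl : inrange g (rlo l) i by rewrite /inrange G1 /= ltnW.
  have [_ _ Dc _] := descr_theta Hg Rl; rewrite -(Dc l Hj erefl).
  rewrite pcm_pk -(g_assoc HP) -pcm_pk asc'; congr pcm.
  have Rf : inrange f (zr f (rlo l)) l by rewrite /inrange leqnn (zr_lohi Pf).
  have [Da _ Dc' _] := descr_theta Hf Rf.
  have Sj : (zr f (rlo l) : nat) = j by rewrite -El Ec Hk.
  by rewrite (Da erefl) (Dc' j erefl Sj).
- move=> j Hj Hk; set l := zs f j in Hj *.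
  have /andP [F1 F2] := (fibE Pf j l).1 erefl.
  have /andP [G1 G2] := (fibE Pg l i).1 Hj.
  have Cl : rhi l <= c.
    rewrite leqNgt; apply/negP => Hlt.
    have : zr f c <= zr f (rlo l) by apply: (zr_mono Pf); move: Hlt; rewrite rhiE ltnS.
    by rewrite Ec Hk leqNgt ltnS F1.
  have El : zr f (rhi l) = zr f c.
    apply: val_inj; apply/eqP; rewrite eqn_leq (zr_mono Pf Cl) /= Ec Hk.
    exact: F2.
  have A1 : zr g (rlo i) <= rhi l by rewrite rhiE (leq_trans G1).
  rewrite -(run A1 Cl C2 El).
  have Rl : inrange g (rhi l) i by rewrite /inrange A1 rhiE.
  have [_ _ _ Dd] := descr_theta Hg Rl; rewrite -(Dd l Hj (rhiE l)).
  rewrite pcm_pk -(g_assoc HP) -pcm_pk asc'; congr pcm.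
  have Rf : inrange f (zr f (rhi l)) l by rewrite /inrange leqnn (zr_lohi Pf).
  have [_ Db _ Dd'] := descr_theta Hf Rf.
  have Sj : (zr f (rhi l) : nat) = j.+1 by rewrite El Ec Hk.
  by rewrite (Db erefl) (Dd' j erefl Sj).
Qed.

Lemma descr_case2 i (k : 'I_(zlen X).+1) (l : 'I_(zlen Y)) :
  zs g l = i -> zr f (rlo l) < k -> k < zr f (rhi l) ->
  descr (zcomp g f) k i (pcm (pk (zss g l)) (theta f k l)).
Proof.
move=> Hl K1 K2.
have /andP [G1 G2] := (fibE Pg l i).1 Hl.
have Rf : inrange f k l by rewrite /inrange (ltnW K1) (ltnW K2).
have [_ _ Dc Dd] := descr_theta Hf Rf.
split => /=.
- move=> Ek; exfalso; suff: zr f (zr g (rlo i)) <= zr f (rlo l) by rewrite -Ek leqNgt K1.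
  by apply: (zr_mono Pf).
- move=> Ek; exfalso; suff: zr f (rhi l) <= zr f (zr g (rhi i)) by rewrite -Ek leqNgt K2.
  by apply: (zr_mono Pf); rewrite rhiE.
- move=> j Hj Hk.
  have Hjl : zs f j = l by apply/(fibE Pf); rewrite -Hk (ltnW K1) K2.
  by rewrite asc' (Dc j Hjl Hk) Hjl.
- move=> j Hj Hk.
  have Hjl : zs f j = l.
    apply/(fibE Pf); rewrite -ltnS -Hk K1 /=.
    exact: ltnW K2.
  by rewrite asc' (Dd j Hjl Hk) Hjl.
Qed.

Lemma valid_comp : zmap_valid (zcomp g f).
Proof.
apply: (valid_of_descr prevalid_comp) => i k /andP [K1 K2] /=.
rewrite /= in K1 K2.
case: (classic (exists c : 'I_(zlen Y).+1,
   [/\ zr g (rlo i) <= c, c <= zr g (rhi i) & zr f c = k])) => [[c [C1 C2 C3]] | Hno].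
  by eexists; apply: descr_case1 C1 C2 C3.
pose F (x : nat) := (zr f (inord x : 'I_(zlen Y).+1) : nat).
have FE : forall c : 'I_(zlen Y).+1, F c = zr f c by move=> c; rewrite /F inord_val.
have Na : (zr f (zr g (rlo i)) : nat) != k.
  apply/negP => /eqP E; apply: Hno; exists (zr g (rlo i)); split => //.
  exact: zr_lohi. by apply: val_inj.
have Nb : (zr f (zr g (rhi i)) : nat) != k.
  apply/negP => /eqP E; apply: Hno; exists (zr g (rhi i)); split => //.
  exact: zr_lohi. by apply: val_inj.
have Fa : F (zr g (rlo i)) < k by rewrite FE ltn_neqAle Na K1.
have Fb : k <= F (zr g (rhi i)) by rewrite FE.
have Hab : zr g (rlo i) < zr g (rhi i).
  rewrite ltn_neqAle (zr_lohi Pg) andbT; apply/negP => /eqP E.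
  have E' : zr g (rlo i) = zr g (rhi i) by apply: val_inj.
  by move: Fb; rewrite -E' leqNgt Fa.
have [c [C1 C2 C3 C4]] := crossing Hab Fa Fb.
have Hc : c < zlen Y by apply: leq_trans C2 (zr_le _ _).
pose l : 'I_(zlen Y) := Ordinal Hc.
have Elo : rlo l = inord c by apply: val_inj; rewrite /= inordK // ltnS ltnW.
have Ehi : rhi l = inord c.+1 by apply: ordE; rewrite rhiE inordK.
have Hl : zs g l = i by apply/(fibE Pg); rewrite /= C1 C2.
have K3 : zr f (rlo l) < k by rewrite Elo.
have K4 : k < zr f (rhi l).
  rewrite ltn_neqAle Ehi C4 andbT; apply/negP => /eqP E.
  apply: Hno; exists (rhi l); split.
  - by rewrite rhiE (leq_trans C1).
  - by rewrite rhiE.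
  - by apply: val_inj; rewrite Ehi /= -E.
by eexists; apply: descr_case2 Hl K3 K4.
Qed.

Lemma theta_comp i (k : 'I_(zlen X).+1) (c : 'I_(zlen Y).+1) :
  zr g (rlo i) <= c -> c <= zr g (rhi i) -> zr f c = k ->
  theta (zcomp g f) k i = pcm (theta g c i) (pk (zrs f c)).
Proof.
move=> C1 C2 Ec.
have R : inrange (zcomp g f) k i.
  rewrite /inrange /= -Ec; apply/andP; split; apply: (zr_mono Pf) => //.
apply: (descr_unique prevalid_comp R); first exact: (descr_theta valid_comp R).
exact: descr_case1.
Qed.

End Comp.

Lemma hat_id n (i : 'I_n.+1) : hat (fun j : 'I_n => j) i = i.
Proof. apply: ord_eq_lt => j; by rewrite hatP. Qed.

Section GoodZc.
Variable P : PCat.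
Hypothesis HP : good P.

Lemma zid_valid (X : zz P) : zmap_valid (zid X).
Proof.
have Hpv : prevalid (zid X).
  split => //= i; first by rewrite hat_id.
  exact: g_vid. exact: g_vid.
apply: (valid_of_descr Hpv) => l k /andP [K1 K2].
exists (if k == rlo l then pk (zfwd l) else pk (zbwd l)).
split => /=.
- by move=> ->; rewrite eqxx (g_idr HP).
- move=> ->; rewrite (g_idr HP); case: eqP => // E.
  by move: (congr1 (@nat_of_ord _) E); rewrite rhiE /= => /eqP; rewrite (gtn_eqF (ltnSn _)).
- move=> j /= Hj Hk; subst l; rewrite (g_idl HP).
  have -> : k = rlo j by apply: val_inj.
  by rewrite eqxx.
- move=> j /= Hj Hk; subst l; rewrite (g_idl HP); case: eqP => // E.
  by move: (congr1 (@nat_of_ord _) E); rewrite Hk /= => /eqP; rewrite (gtn_eqF (ltnSn _)).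
Qed.

Lemma zcompA (X Y Z W : zz P) (h : zmap Z W) (g : zmap Y Z) (f : zmap X Y) :
  zcomp h (zcomp g f) = zcomp (zcomp h g) f.
Proof.
apply: zmap_ext => //= i; by rewrite (g_assoc HP).
Qed.

Lemma zcomp1f (X Y : zz P) (f : zmap X Y) : zcomp (zid Y) f = f.
Proof. apply: zmap_ext => //= i; by rewrite (g_idl HP). Qed.

Lemma zcompf1 (X Y : zz P) (f : zmap X Y) : zcomp f (zid X) = f.
Proof. apply: zmap_ext => //= i; by rewrite (g_idr HP). Qed.

Lemma good_Zc : good (Zc P).
Proof.
split => /=.
- by move=> *; apply: zcompA.
- by move=> *; apply: zcomp1f.
- by move=> *; apply: zcompf1.
- by move=> a b c g f Hf Hg; apply: valid_comp.
- by move=> a; apply: zid_valid.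
Qed.

End GoodZc.

Lemma good_pcat (C : category) : good (pcat_of C).
Proof.
split => //=.
- by move=> *; apply: ccompA.
- by move=> *; apply: ccomp1f.
- by move=> *; apply: ccompf1.
Qed.

Lemma good_Zn (C : category) n : good (Zn n (pcat_of C)).
Proof. elim: n => [|n IH] /=; [exact: good_pcat | exact: good_Zc]. Qed.

Lemma sig_of_ex (T : Type) (R : T -> Prop) : (exists x, R x) -> {x : T | R x}.
Proof. exact: constructive_indefinite_description. Qed.

Lemma pk_cmp_id (P : PCat) (HP : good P) (a b c d : ob P) (x : hom b c) (e : hom a b) :
  pk e = pk (@idm P d) -> pk (cmp x e) = pk x.
Proof.
move=> E; have ea := pk_src E; have eb := pk_tgt E; subst a b.
by rewrite (pk_inj E) (g_idr HP).
Qed.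

Lemma pk_id_cmp (P : PCat) (HP : good P) (a b c d : ob P) (x : hom a b) (e : hom b c) :
  pk e = pk (@idm P d) -> pk (cmp e x) = pk x.
Proof.
move=> E; have ea := pk_src E; have eb := pk_tgt E; subst c b.
by rewrite (pk_inj E) (g_idl HP).
Qed.

Lemma hat_empty n m (psi : 'I_n -> 'I_m) (Hm : monotone psi) (l : 'I_m) :
  (forall j, psi j <> l) -> hat psi (rlo l) = hat psi (rhi l).
Proof.
move=> He; apply: ord_eq_lt => j; rewrite !hatP // rloE rhiE ltnS [in RHS]leq_eqVlt.
case: eqP => //= E; exfalso; apply: (He j); exact: ordE.
Qed.

Lemma theta_typed (P : PCat) (HP : good P) (X Y : zz P) (h : zmap X Y) (Hh : zmap_valid h)
  (k : 'I_(zlen X).+1) (l : 'I_(zlen Y)) : inrange h k l ->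
  exists t : hom (zreg k) (zsing l), valid t /\ pk t = theta h k l.
Proof.
move=> R; have Pv := prevalid_of_valid Hh.
have [Da Db Dc Dd] := descr_theta Hh R.
case/andP: (R) => R1 R2.
case: (ltnP k (zr h (rhi l))) => K.
  have Hk : k < zlen X by apply: leq_trans K (zr_le _ _).
  pose j : 'I_(zlen X) := Ordinal Hk.
  have Hj : zs h j = l by apply/(fibE Pv); rewrite /= R1 K.
  have e1 : zreg (rlo j) = zreg k by congr zreg; apply: val_inj.
  have e2 : zsing (zs h j) = zsing l by rewrite Hj.
  exists (tr e1 e2 (cmp (zss h j) (zfwd j))); split.
    case: Hh => _ _ _ Hs _; have := g_vcmp HP (zfwd_valid j) (Hs j).
    by apply: pk_tr (esym (pk_trE _ _ _)).
  by rewrite pk_trE (Dc j Hj).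
have Ek : k = zr h (rhi l) by apply: val_inj; apply/eqP; rewrite eqn_leq R2 K.
have e1 : zreg (zr h (rhi l)) = zreg k by rewrite Ek.
exists (tr e1 erefl (cmp (zbwd l) (zrs h (rhi l)))); split.
  case: Hh => _ _ Hr _ _; have := g_vcmp HP (Hr (rhi l)) (zbwd_valid l).
  by apply: pk_tr (esym (pk_trE _ _ _)).
by rewrite pk_trE (Db Ek).
Qed.

Section Lift.
Variable P : PCat.
Hypothesis HP : good P.
Variable X : zz P.
Variable m : nat.
Variable psi : 'I_(zlen X) -> 'I_m.
Hypothesis Hm : monotone psi.
Hypothesis Hi : injective psi.

Definition ereg (c : 'I_m.+1) : ob P := zreg (z:=X) (hat psi c).
Definition esing (l : 'I_m) : ob P :=
  match [pick j | psi j == l] with Some j => zsing (z:=X) j | None => zreg (z:=X) (hat psi (rlo l)) end.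

Lemma efwd_ex (l : 'I_m) : {e : hom (ereg (rlo l)) (esing l) |
  [/\ valid e, (forall j, psi j = l -> pk e = pk (zfwd j)) &
      ((forall j, psi j <> l) -> pk e = pk (@idm P (zreg (z:=X) (hat psi (rlo l)))))]}.
Proof.
apply: sig_of_ex; rewrite /esing /ereg; case: pickP => [j /eqP Hj | Hn].
  have e1 : zreg (rlo j) = zreg (z:=X) (hat psi (rlo l)).
    by congr zreg; apply: ordE; rewrite /= -Hj hat_inj_lo.
  exists (tr e1 erefl (zfwd j)); split.
  - by apply: pk_tr (esym (pk_trE _ _ _)) (zfwd_valid j).
  - by move=> j' Hj'; rewrite pk_trE; have -> : j' = j by apply: Hi; rewrite Hj Hj'.
  - by move=> He; exfalso; apply: (He j).
exists idm; split => //; first exact: g_vid.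
by move=> j Hj; move: (Hn j); rewrite Hj eqxx.
Qed.

Lemma ebwd_ex (l : 'I_m) : {e : hom (ereg (rhi l)) (esing l) |
  [/\ valid e, (forall j, psi j = l -> pk e = pk (zbwd j)) &
      ((forall j, psi j <> l) -> pk e = pk (@idm P (zreg (z:=X) (hat psi (rlo l)))))]}.
Proof.
apply: sig_of_ex; rewrite /esing /ereg; case: pickP => [j /eqP Hj | Hn].
  have e1 : zreg (rhi j) = zreg (z:=X) (hat psi (rhi l)).
    by congr zreg; apply: ordE; rewrite /= -Hj hat_inj_hi // rhiE.
  exists (tr e1 erefl (zbwd j)); split.
  - by apply: pk_tr (esym (pk_trE _ _ _)) (zbwd_valid j).
  - by move=> j' Hj'; rewrite pk_trE; have -> : j' = j by apply: Hi; rewrite Hj Hj'.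
  - by move=> He; exfalso; apply: (He j).
have He : forall j, psi j <> l by move=> j Hj; move: (Hn j); rewrite Hj eqxx.
have e1 : zreg (z:=X) (hat psi (rlo l)) = zreg (hat psi (rhi l)) by rewrite hat_empty.
exists (tr e1 erefl idm); split.
- by apply: pk_tr (esym (pk_trE _ _ _)) (g_vid HP _).
- by move=> j Hj; exfalso; apply: (He j).
- by move=> _; rewrite pk_trE.
Qed.

Definition efwd l := proj1_sig (efwd_ex l).
Definition ebwd l := proj1_sig (ebwd_ex l).
Definition efwd_spec l := proj2_sig (efwd_ex l).
Definition ebwd_spec l := proj2_sig (ebwd_ex l).

Lemma efwd_valid l : valid (efwd l). Proof. by case: (efwd_spec l). Qed.
Lemma ebwd_valid l : valid (ebwd l). Proof. by case: (ebwd_spec l). Qed.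

Definition E : zz P := @ZZ P m ereg esing efwd ebwd efwd_valid ebwd_valid.

Lemma sss_ex (j : 'I_(zlen X)) : {t : hom (zsing (z:=X) j) (esing (psi j)) |
  valid t /\ pk t = pk (@idm P (zsing (z:=X) j))}.
Proof.
apply: sig_of_ex; rewrite /esing; case: pickP => [j' /eqP Hj | Hn].
  have -> : j' = j by apply: Hi.
  by exists idm; split => //; exact: g_vid.
by move: (Hn j); rewrite eqxx.
Qed.

Definition S : zmap X E :=
  @ZMap P X E psi (hat psi) (fun c => @idm P (ereg c)) (fun j => proj1_sig (sss_ex j)).

Lemma S_ss j : pk (zss S j) = pk (@idm P (zsing (z:=X) j)).
Proof. by case: (proj2_sig (sss_ex j)). Qed.
Lemma S_ss_valid j : valid (zss S j).
Proof. by case: (proj2_sig (sss_ex j)). Qed.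

Lemma S_valid : zmap_valid S.
Proof.
have Pv : prevalid S.
  split => //= [c|j]; [exact: g_vid | exact: S_ss_valid].
apply: (valid_of_descr Pv) => l k /andP [K1 K2].
case: (classic (exists j, psi j = l)) => [[j Hj] | Hn].
- have Hlo : hat psi (rlo l) = rlo j by apply: ordE; rewrite /= -Hj hat_inj_lo.
  have Hhi : hat psi (rhi l) = rhi j by apply: ordE; rewrite -Hj hat_inj_hi // rhiE.
  have [_ F1 _] := efwd_spec l; have [_ B1 _] := ebwd_spec l.
  exists (if k == rlo j then pk (zfwd j) else pk (zbwd j)); split => /=.
  + move=> ->; rewrite (g_idr HP).
    have -> : (hat psi (rlo l) == rlo j) = true by rewrite Hlo eqxx.
    exact: F1.
  + move=> ->; rewrite (g_idr HP) (B1 j Hj).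
    have -> : (hat psi (rhi l) == rlo j) = false.
      by rewrite Hhi; apply/negbTE/eqP => /(congr1 (@nat_of_ord _)); rewrite rhiE => /eqP; rewrite (gtn_eqF (ltnSn _)).
    done.
  + move=> j' Hj' Hk; have ej : j' = j by apply: Hi; rewrite Hj Hj'.
    subst j'; rewrite (pk_id_cmp HP _ (S_ss j)).
    have -> : k = rlo j by apply: val_inj.
    by rewrite eqxx.
  + move=> j' Hj' Hk; have ej : j' = j by apply: Hi; rewrite Hj Hj'.
    subst j'; rewrite (pk_id_cmp HP _ (S_ss j)); case: eqP => // Eq.
    by move: (congr1 (@nat_of_ord _) Eq); rewrite Hk /= => /eqP; rewrite (gtn_eqF (ltnSn _)).
- have He : forall j, psi j <> l by move=> j Hj; apply: Hn; exists j.
  have [_ _ F2] := efwd_spec l; have [_ _ B2] := ebwd_spec l.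
  exists (pk (@idm P (zreg (z:=X) (hat psi (rlo l))))); split => /=.
  + by move=> _; rewrite (g_idr HP) (F2 He).
  + by move=> _; rewrite (g_idr HP) (B2 He).
  + by move=> j Hj; exfalso; apply: (He j).
  + by move=> j Hj; exfalso; apply: (He j).
Qed.

Section LiftV.
Variable Y' : zz P.
Variable h : zmap X Y'.
Variable u : 'I_m -> 'I_(zlen Y').
Hypothesis Hh : zmap_valid h.
Hypothesis Hu : monotone u.
Hypothesis Huh : forall j, u (psi j) = zs h j.

Lemma hat_hu i : hat psi (hat u i) = zr h i.
Proof.
case: Hh => _ Hr _ _ _; rewrite Hr hat_comp //; exact: hat_ext.
Qed.

Lemma vrs_ex (i : 'I_(zlen Y').+1) : {t : hom (ereg (hat u i)) (zreg (z:=Y') i) |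
  valid t /\ pk t = pk (zrs h i)}.
Proof.
apply: sig_of_ex; have e1 : zreg (zr h i) = ereg (hat u i) by rewrite /ereg hat_hu.
exists (tr e1 erefl (zrs h i)); split; last exact: pk_trE.
case: Hh => _ _ Hr _ _; exact: pk_tr (esym (pk_trE _ _ _)) (Hr i).
Qed.

Lemma range_l (l : 'I_m) : inrange h (hat psi (rlo l)) (u l).
Proof.
rewrite /inrange -!hat_hu; apply/andP; split; apply: hat_mono => //.
- by rewrite leqNgt rloE (hatP Hu) rloE ltnn.
- by apply: ltnW; rewrite rloE (hatP Hu) rhiE ltnSn.
Qed.

Lemma vss_ex (l : 'I_m) : {t : hom (esing l) (zsing (u l)) |
  [/\ valid t, (forall j, psi j = l -> pk t = pk (zss h j)) &
     ((forall j, psi j <> l) -> pk t = theta h (hat psi (rlo l)) (u l))]}.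
Proof.
apply: sig_of_ex; rewrite /esing; case: pickP => [j /eqP Hj | Hn].
  have e2 : zsing (zs h j) = zsing (u l) by rewrite -Huh Hj.
  exists (tr erefl e2 (zss h j)); split.
  - by case: Hh => _ _ _ Hs _; apply: pk_tr (esym (pk_trE _ _ _)) (Hs j).
  - by move=> j' Hj'; rewrite pk_trE; have -> : j' = j by apply: Hi; rewrite Hj Hj'.
  - by move=> He; exfalso; apply: (He j).
have [t [Vt Et]] := theta_typed HP Hh (range_l l).
exists t; split => // j Hj; by move: (Hn j); rewrite Hj eqxx.
Qed.

Definition V : zmap E Y' :=
  @ZMap P E Y' u (hat u) (fun i => proj1_sig (vrs_ex i)) (fun l => proj1_sig (vss_ex l)).

Lemma V_rs i : pk (zrs V i) = pk (zrs h i).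
Proof. by case: (proj2_sig (vrs_ex i)). Qed.
Lemma V_ss_in j : pk (zss V (psi j)) = pk (zss h j).
Proof. by case: (proj2_sig (vss_ex (psi j))) => _ H _; apply: H. Qed.
Lemma V_ss_out l : (forall j, psi j <> l) -> pk (zss V l) = theta h (hat psi (rlo l)) (u l).
Proof. by case: (proj2_sig (vss_ex l)) => _ _ H; apply: H. Qed.

Lemma V_valid : zmap_valid V.
Proof.
have Pv : prevalid V.
  split => //= [i|l]; [by case: (proj2_sig (vrs_ex i)) | by case: (proj2_sig (vss_ex l))].
have Ph := prevalid_of_valid Hh.
apply: (valid_of_descr Pv) => i k /andP [K1 K2].
exists (theta h (hat psi k) i); split => /=.
- move=> ->; rewrite -pcm_pk V_rs pcm_pk hat_hu.
  have Ra : inrange h (zr h (rlo i)) i by rewrite /inrange leqnn (zr_lohi Ph).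
  by have [Da _ _ _] := descr_theta Hh Ra; apply: Da.
- move=> ->; rewrite -pcm_pk V_rs pcm_pk hat_hu.
  have Rb : inrange h (zr h (rhi i)) i by rewrite /inrange leqnn (zr_lohi Ph).
  by have [_ Db _ _] := descr_theta Hh Rb; apply: Db.
- move=> l Hl Hk; have -> : k = rlo l by apply: val_inj.
  case: (classic (exists j, psi j = l)) => [[j Hj] | Hn].
  + subst l; have [_ F1 _] := efwd_spec (psi j).
    rewrite -pcm_pk V_ss_in (F1 j erefl) pcm_pk.
    have Hlo : hat psi (rlo (psi j)) = rlo j by apply: ordE; rewrite hat_inj_lo.
    rewrite Hlo -Hl Huh.
    have Rj : inrange h (rlo j) (zs h j).
      by have /andP [J1 J2] := (fibE Ph j (zs h j)).1 erefl; rewrite /inrange J1 ltnW.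
    by have [_ _ Dc _] := descr_theta Hh Rj; apply: Dc.
  + have He : forall j, psi j <> l by move=> j Hj; apply: Hn; exists j.
    have [_ _ F2] := efwd_spec l.
    by rewrite (pk_cmp_id HP _ (F2 He)) V_ss_out // Hl.
- move=> l Hl Hk; have -> : k = rhi l by apply: ordE; rewrite rhiE.
  case: (classic (exists j, psi j = l)) => [[j Hj] | Hn].
  + subst l; have [_ B1 _] := ebwd_spec (psi j).
    rewrite -pcm_pk V_ss_in (B1 j erefl) pcm_pk.
    have Hhi : hat psi (rhi (psi j)) = rhi j by apply: ordE; rewrite hat_inj_hi // rhiE.
    rewrite Hhi -Hl Huh.
    have Rj : inrange h (rhi j) (zs h j).
      by have /andP [J1 J2] := (fibE Ph j (zs h j)).1 erefl; rewrite /inrange rhiE J2 (leq_trans J1).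
    by have [_ _ _ Dd] := descr_theta Hh Rj; apply: Dd => //; rewrite rhiE.
  + have He : forall j, psi j <> l by move=> j Hj; apply: Hn; exists j.
    have [_ _ B2] := ebwd_spec l.
    by rewrite (pk_cmp_id HP _ (B2 He)) V_ss_out // -(hat_empty Hm He) Hl.
Qed.

Lemma VS : zcomp V S = h.
Proof.
apply: zmap_ext => /=.
- exact: Huh.
- exact: hat_hu.
- by move=> i; rewrite (g_idr HP) V_rs.
- by move=> j; rewrite (pk_cmp_id HP _ (S_ss j)) V_ss_in.
Qed.

End LiftV.

Section Uniq.
Variable Y' : zz P.
Variable h : zmap X Y'.

Lemma uniq_parts (v : zmap E Y') : zmap_valid v -> zcomp v S = h ->
  [/\ (forall i, pk (zrs v i) = pk (zrs h i)),
      (forall j, pk (zss v (psi j)) = pk (zss h j)) &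
      (forall l, (forall j, psi j <> l) -> pk (zss v l) = theta h (hat psi (rlo l)) (zs v l))].
Proof.
move=> Hv Hvh; split.
- move=> i; rewrite -(g_idr HP (zrs v i)).
  exact: (congr1 (fun F => pk (zrs F i)) Hvh).
- move=> j; rewrite -(pk_cmp_id HP (zss v (psi j)) (S_ss j)).
  exact: (congr1 (fun F => pk (zss F j)) Hvh).
- move=> l He; have [_ _ F2] := efwd_spec l.
  have Pv := prevalid_of_valid Hv.
  rewrite -(pk_cmp_id HP (zss v l) (F2 He)).
  have /andP [J1 J2] := (fibE Pv l (zs v l)).1 erefl.
  have Rl : inrange v (rlo l) (zs v l) by rewrite /inrange J1 /= ltnW.
  have [_ _ Dc _] := descr_theta Hv Rl.
  rewrite (Dc l erefl erefl) -Hvh.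
  rewrite (@theta_comp P HP X E Y' S v S_valid Hv (zs v l) (hat psi (rlo l)) (rlo l) J1 (ltnW J2) erefl).
  by rewrite -(Dc l erefl erefl) pcm_pk (g_idr HP).
Qed.

Lemma lift_uniq (v1 v2 : zmap E Y') : zmap_valid v1 -> zmap_valid v2 ->
  zcomp v1 S = h -> zcomp v2 S = h -> (forall l, zs v1 l = zs v2 l) -> v1 = v2.
Proof.
move=> H1 H2 E1 E2 Hs.
have [R1 I1 O1] := uniq_parts H1 E1; have [R2 I2 O2] := uniq_parts H2 E2.
apply: zmap_ext => //.
- move=> i; case: H1 => _ -> _ _ _; case: H2 => _ -> _ _ _; exact: hat_ext.
- by move=> i; rewrite R1 R2.
- move=> l; case: (classic (exists j, psi j = l)) => [[j Hj] | Hn].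
    by subst l; rewrite I1 I2.
  have He : forall j, psi j <> l by move=> j Hj; apply: Hn; exists j.
  by rewrite O1 // O2 // Hs.
Qed.

End Uniq.

Lemma S_cocart : pi_cocartesian S.
Proof.
move=> Y' h u Hh Hu Huh.
exists (V Hh Hu Huh); split.
  by split; [exact: V_valid | split; [exact: VS | by []]].
move=> v' [Hv' [Ev' Sv']]; apply: lift_uniq Hv' (V_valid _ _ _) Ev' (VS _ _ _) _.
by move=> l; rewrite Sv'.
Qed.

Lemma S_mono : delta_mono (zs S).
Proof. move=> k a b _ _ H x; apply: Hi; exact: H. Qed.

End Lift.

Lemma iso_intro (P : PCat) (a b a' b' : ob P) (f : hom a b) (g : hom b' a') :
  b' = b -> a' = a -> valid f -> valid g ->
  pcm (pk g) (pk f) = pk (@idm P a) -> pcm (pk f) (pk g) = pk (@idm P b) -> is_iso f.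
Proof.
move=> e1 e2; subst; rewrite !pcm_pk => Vf Vg E1 E2; split => //.
by exists g; split => //; split; apply: pk_inj.
Qed.

Lemma mono_inj_ge n m (psi : 'I_n -> 'I_m) : monotone psi -> injective psi ->
  forall j : 'I_n, j <= psi j.
Proof.
move=> Hm Hi.
suff H : forall k (j : 'I_n), (j : nat) = k -> k <= psi j by move=> j; exact: H.
elim=> [|k IH] j Hj; first by [].
have Hk : k < n by rewrite -Hj ltnW // ltn_ord.
have Hlt : Ordinal Hk < j by rewrite Hj /=.
have := mono_strict Hm Hi Hlt; have := IH (Ordinal Hk) erefl.
exact: leq_ltn_trans.
Qed.

Lemma inj_leq n m (psi : 'I_n -> 'I_m) : injective psi -> n <= m.
Proof. move=> Hi; have := leq_card psi Hi; by rewrite !card_ord. Qed.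

Section IsoZc.
Variable P : PCat.
Hypothesis HP : good P.

Lemma iso_Zc (X Y : zz P) (f : zmap X Y) : @is_iso (Zc P) X Y f ->
  [/\ pi_vertical f, (forall i, is_iso (zrs f i)) & (forall j, is_iso (zss f j))].
Proof.
move=> [Vf [g [Vg [Egf Efg]]]]; rewrite /= in Egf Efg.
have Sgf : forall j, zs g (zs f j) = j by move=> j; exact: (congr1 (fun F => zs F j) Egf).
have Sfg : forall i, zs f (zs g i) = i by move=> i; exact: (congr1 (fun F => zs F i) Efg).
have Rgf : forall c, zr f (zr g c) = c by move=> c; exact: (congr1 (fun F => zr F c) Egf).
have Rfg : forall c, zr g (zr f c) = c by move=> c; exact: (congr1 (fun F => zr F c) Efg).
have Injf : injective (zs f) by move=> x y E; rewrite -(Sgf x) -(Sgf y) E.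
have Injg : injective (zs g) by move=> x y E; rewrite -(Sfg x) -(Sfg y) E.
have Mf : monotone (zs f) by case: Vf.
have Mg : monotone (zs g) by case: Vg.
split.
- split; first by apply/eqP; rewrite eqn_leq (inj_leq Injf) (inj_leq Injg).
  move=> j; apply/eqP; rewrite eqn_leq (mono_inj_ge Mf Injf j) andbT.
  by rewrite -{2}(Sgf j) (mono_inj_ge Mg Injg).
- move=> i; apply: (@iso_intro P _ _ _ _ (zrs f i) (zrs g (zr f i))).
  + by rewrite Rfg.
  + by [].
  + by case: Vf.
  + by case: Vg.
  + have E := congr1 (fun F => pk (zrs F (zr f i))) Egf; rewrite /= in E.
    rewrite -E -pcm_pk; congr pcm; by rewrite Rfg.
  + have E := congr1 (fun F => pk (zrs F i)) Efg; rewrite /= in E.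
    by rewrite pcm_pk E.
- move=> j; apply: (@iso_intro P _ _ _ _ (zss f j) (zss g (zs f j))).
  + by [].
  + by rewrite Sgf.
  + by case: Vf.
  + by case: Vg.
  + have E := congr1 (fun F => pk (zss F j)) Egf; rewrite /= in E.
    by rewrite pcm_pk E.
  + have E := congr1 (fun F => pk (zss F (zs f j))) Efg; rewrite /= in E.
    have E2 : pk (zss f j) = pk (zss f (zs g (zs f j))) by rewrite Sgf.
    by rewrite E2 pcm_pk E.
Qed.

End IsoZc.

Definition SD (C : category) n := fun (X Y : zz (Zn n (pcat_of C))) (f : zmap X Y) =>
  (zmap_valid f /\ pi_cocartesian f /\ delta_mono (zs f)) \/
  (zmap_valid f /\ pi_vertical f /\ (forall i, degen (zrs f i)) /\ (forall j, degen (zss f j))).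

Lemma degenS (C : category) n (X Y : zz (Zn n (pcat_of C))) (f : zmap X Y) :
  @degen (pcat_of C) n.+1 X Y f = @comp_closure (Zc (Zn n (pcat_of C))) (@SD C n) X Y f.
Proof. reflexivity. Qed.

Record Inv (C : category) (n : nat) : Prop := MkInv {
  i_iso : forall (a b : ob (Zn n (pcat_of C))) (f : hom a b), is_iso f -> degen f;
  i_valid : forall (a b : ob (Zn n (pcat_of C))) (f : hom a b), degen f -> valid f;
  i_cmp : forall (a b c : ob (Zn n (pcat_of C))) (g : hom b c) (f : hom a b),
      degen f -> degen g -> degen (cmp g f);
  i_two : forall (A B T : ob (Zn n (pcat_of C))) (f : hom A T) (g : hom B T) (phi : hom A B),
      valid f -> valid g -> valid phi -> cmp g phi = f -> degen f -> degen g -> degen phi }.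

Lemma Inv0 (C : category) : Inv C 0.
Proof.
split => /=.
- by [].
- by move=> a b f [].
- move=> a b c g f [_ [f' [_ [F1 F2]]]] [_ [g' [_ [G1 G2]]]]; split => //.
  exists (ccomp f' g'); split => //; split.
  + rewrite /pcat_of /= in F1 F2 G1 G2 *.
    by rewrite -!ccompA (ccompA g') G1 ccomp1f F1.
  + rewrite /pcat_of /= in F1 F2 G1 G2 *.
    by rewrite -!ccompA (ccompA f) F2 ccomp1f G2.
- move=> A B T f g phi _ _ _ <- [_ [f' [_ [F1 F2]]]] [_ [g' [_ [G1 G2]]]]; split => //.
  exists (ccomp f' g); split => //; split.
  + rewrite /pcat_of /= in F1 F2 G1 G2 *.
    by rewrite -ccompA F1.
  + rewrite /pcat_of /= in F1 F2 G1 G2 *.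
    have E : ccomp phi (ccomp f' g) = ccomp (ccomp g' g) (ccomp phi (ccomp f' g)).
      by rewrite G1 ccomp1f.
    rewrite E -ccompA (ccompA phi f' g) (ccompA g (ccomp phi f') g) (ccompA g phi f').
    by rewrite F2 ccomp1f G1.
Qed.

Section Step.
Variable C : category.
Variable n : nat.
Hypothesis IH : Inv C n.
Notation P := (Zn n (pcat_of C)).
Let HP : good P := good_Zn C n.

Lemma dtr (a b a' b' : ob P) (f : hom a b) (g : hom a' b') : pk f = pk g -> degen f -> degen g.
Proof. exact: (@pk_tr P (fun a b f => @degen (pcat_of C) n a b f)). Qed.

Definition char (X Y : zz P) (f : zmap X Y) : Prop :=
  [/\ injective (zs f), (forall i, degen (zrs f i)), (forall j, degen (zss f j)) &
      forall l, (forall j, zs f j <> l) -> degen (cmp (zfwd l) (zrs f (rlo l)))].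

Lemma mono_inj n' m' (psi : 'I_n' -> 'I_m') : delta_mono psi -> injective psi.
Proof.
move=> H x y E.
have := H 1 (fun _ => x) (fun _ => y) (fun _ _ _ => leqnn _) (fun _ _ _ => leqnn _) (fun _ => E) ord0.
by [].
Qed.

Lemma id_mono m' : monotone (fun l : 'I_m' => l).
Proof. by []. Qed.

Section Fac.
Variables X Y : zz P.
Variable f : zmap X Y.
Hypothesis Vf : zmap_valid f.
Hypothesis If : injective (zs f).
Let Mf : monotone (zs f) := match Vf with And5 H _ _ _ _ => H end.
Definition EF := E HP Mf If.
Definition SF : zmap X EF := S HP Mf If.
Definition QF : zmap EF Y := V HP Mf If Vf (@id_mono (zlen Y)) (fun j => erefl).

Lemma QF_S : zcomp QF SF = f.
Proof. exact: (VS HP Mf If Vf (@id_mono (zlen Y)) (fun j => erefl)). Qed.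

Lemma QF_valid : zmap_valid QF.
Proof. exact: (V_valid HP Mf If Vf (@id_mono (zlen Y)) (fun j => erefl)). Qed.

Lemma SF_valid : zmap_valid SF.
Proof. exact: (S_valid HP Mf If). Qed.
Lemma QF_ss_out l : (forall j, zs f j <> l) ->
  pk (zss QF l) = pk (cmp (zfwd l) (zrs f (rlo l))).
Proof.
move=> He; rewrite (V_ss_out HP Mf If Vf (@id_mono (zlen Y)) (fun j => erefl) He).
have Pf := prevalid_of_valid Vf.
have Ra : inrange f (zr f (rlo l)) l by rewrite /inrange leqnn (zr_lohi Pf).
have [Da _ _ _] := descr_theta Vf Ra.
case: (Vf) => _ Hr _ _ _; rewrite -Hr; exact: esym (Da erefl).
Qed.

Lemma QF_rs i : pk (zrs QF i) = pk (zrs f i).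
Proof. exact: (V_rs HP Mf If Vf (@id_mono (zlen Y)) (fun j => erefl)). Qed.
Lemma QF_ss_in j : pk (zss QF (zs f j)) = pk (zss f j).
Proof. exact: (V_ss_in HP Mf If Vf (@id_mono (zlen Y)) (fun j => erefl)). Qed.

Lemma fac_degen : char f -> degen (n := n.+1) f.
Proof.
move=> [Hi Dr Ds De]; rewrite degenS -QF_S.
apply: (@cc_comp (Zc P)); apply: cc_base.
- left; split; first exact: SF_valid.
  split; [exact: (S_cocart (HP := HP)) | exact: (S_mono (HP := HP))].
- right; split; first exact: QF_valid.
  split; first by split.
  split.
  + move=> i; apply: dtr (Dr i); apply/esym; exact: QF_rs.
  + move=> l; case: (classic (exists j, zs f j = l)) => [[j Hj] | Hn].
      subst l; apply: dtr (Ds j); apply/esym; exact: QF_ss_in.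
    have He : forall j, zs f j <> l by move=> j Hj; apply: Hn; exists j.
    apply: dtr (De l He); apply/esym; exact: QF_ss_out.
Qed.
End Fac.
Lemma char_simple (X Y : zz P) (f : zmap X Y) :
  zmap_valid f -> pi_cocartesian f -> delta_mono (zs f) -> char f.
Proof.
move=> Vf Cf Mo; have If := mono_inj Mo.
pose S0 := SF Vf If; pose Q := QF Vf If.
have [w [[Vw [Ew Sw]] _]] := Cf _ S0 (fun l => l) (SF_valid Vf If) (@id_mono _) (fun j => erefl).
have Vq := QF_valid Vf If.
have E1 : zcomp Q w = zid Y.
  have [v0 [_ U]] := Cf _ f (fun l => l) Vf (@id_mono _) (fun j => erefl).
  have U1 : zcomp Q w = v0.
    apply: U; split; first exact: (valid_comp HP Vw Vq).
    split; last by move=> j /=; rewrite Sw.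
    by rewrite -(zcompA HP) Ew; exact: QF_S.
  have U2 : zid Y = v0.
    apply: U; split; first exact: zid_valid.
    split; [exact: zcomp1f | by []].
  by rewrite U1 U2.
have E2 : zcomp w Q = zid (EF Vf If).
  apply: (@lift_uniq P HP X (zlen Y) (zs f) _ If _ S0).
  - exact: (valid_comp HP Vq Vw).
  - exact: zid_valid.
  - by rewrite -(zcompA HP) (QF_S Vf If).
  - exact: zcomp1f.
  - by move=> l /=; rewrite Sw.
have Iq : @is_iso (Zc P) _ _ Q by split => //; exists w; split.
have [_ Ir Is] := iso_Zc Iq.
split => //.
- move=> i; apply: dtr (i_iso IH (Ir i)); exact: QF_rs.
- move=> j; apply: dtr (i_iso IH (Is (zs f j))); exact: QF_ss_in.
- move=> l He; apply: dtr (i_iso IH (Is l)); exact: QF_ss_out.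
Qed.
Lemma char_vertical (X Y : zz P) (f : zmap X Y) :
  pi_vertical f -> (forall i, degen (zrs f i)) -> (forall j, degen (zss f j)) -> char f.
Proof.
move=> [e Hv] Dr Ds; split => //.
- by move=> x y E; apply: val_inj; rewrite /= -Hv E Hv.
- move=> l He; exfalso.
  have Hl : l < zlen X by rewrite e ltn_ord.
  apply: (He (Ordinal Hl)); apply: val_inj; by rewrite /= Hv.
Qed.

Lemma char_comp (X Y Z : zz P) (f : zmap X Y) (g : zmap Y Z) :
  zmap_valid f -> zmap_valid g -> char f -> char g -> char (zcomp g f).
Proof.
move=> Vf Vg [If Rf Sf Ef] [Ig Rg Sg Eg]; split => /=.
- by move=> x y /Ig /If.
- by move=> i; apply: (i_cmp IH).
- by move=> j; apply: (i_cmp IH).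
- move=> l He; case: (classic (exists l', zs g l' = l)) => [[l' Hl'] | Hn].
  + have He' : forall j, zs f j <> l' by move=> j Hj; apply: (He j); rewrite Hj.
    have Pg := prevalid_of_valid Vg.
    have Least : forall j, zs g j = l -> l' <= j by move=> j Hj; rewrite (Ig j l') ?Hj.
    have Lo : zr g (rlo l) = rlo l' by apply: ordE; rewrite (least_lo Pg Hl' Least).
    case: (Vg) => _ _ _ _ Hc; have [Hp _] := Hc l.
    apply: dtr (i_cmp IH (Ef l' He') (Sg l')).
    rewrite !(asc HP) -(Hp l' Hl' Least).
    congr pcm; by rewrite Lo.
  + have He' : forall j, zs g j <> l by move=> j Hj; apply: Hn; exists j.
    apply: dtr (i_cmp IH (Rf (zr g (rlo l))) (Eg l He')).
    by rewrite (asc HP) pcm_pk.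
Qed.

Lemma cc_valid (A B : zz P) (h : zmap A B) : @comp_closure (Zc P) (@SD C n) A B h -> zmap_valid h.
Proof.
elim => {A B h}.
- by move=> A B h [[]|[]].
- by move=> A B D h1 h2 _ V1 _ V2; apply: (valid_comp HP).
Qed.

Lemma degen_char (X Y : zz P) (f : zmap X Y) : degen (n := n.+1) f -> char f.
Proof.
rewrite degenS; elim => {X Y f}.
- move=> X Y f [[Vf [Cf Mo]] | [Vf [Vv [Dr Ds]]]].
  + exact: char_simple.
  + exact: char_vertical.
- move=> X Y Z f g Df Cf Dg Cg.
  exact: char_comp (cc_valid Df) (cc_valid Dg) Cf Cg.
Qed.
Lemma two_step (A B T : zz P) (f : zmap A T) (g : zmap B T) (phi : zmap A B) :
  zmap_valid f -> zmap_valid g -> zmap_valid phi -> zcomp g phi = f ->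
  char f -> char g -> char phi.
Proof.
move=> Vf Vg Vp Hc Cf Cg; subst f.
case: Cf => If Rf Sf Ef; case: Cg => Ig Rg Sg Eg.
have Pg := prevalid_of_valid Vg.
case: (Vf) => _ _ Vfr Vfs _; case: (Vg) => Mg Hrg Vgr Vgs Hcg; case: (Vp) => _ _ Vpr Vps _.
split.
- by move=> x y E; apply: If; rewrite /= E.
- move=> c; have [i Hi] := hat_surj Mg Ig c.
  have Ec : zr g i = c by rewrite Hrg.
  rewrite -Ec; exact: (i_two IH (Vfr i) (Vgr i) (Vpr _) erefl (Rf i) (Rg i)).
- move=> j; exact: (i_two IH (Vfs j) (Vgs _) (Vps j) erefl (Sf j) (Sg _)).
- move=> l He; pose i := zs g l.
  have He' : forall j, zs (zcomp g phi) j <> i.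
    by move=> j /= /Ig Hj; apply: (He j).
  have Least : forall j, zs g j = i -> l <= j by move=> j /Ig ->.
  have Lo : zr g (rlo i) = rlo l by apply: ordE; rewrite (least_lo Pg erefl Least).
  have [Hp _] := Hcg i.
  have Vphi' : valid (cmp (zfwd l) (zrs phi (rlo l))) by apply: (g_vcmp HP) => //; exact: zfwd_valid.
  have Vf'' : valid (cmp (zss g l) (cmp (zfwd l) (zrs phi (rlo l)))) by apply: (g_vcmp HP).
  have Df'' : degen (cmp (zss g l) (cmp (zfwd l) (zrs phi (rlo l)))).
    apply: dtr (Ef i He'); rewrite /= !(asc HP) (Hp l erefl Least).
    congr pcm; by rewrite Lo.
  exact: (i_two IH Vf'' (Vgs l) Vphi' erefl Df'' (Sg l)).
Qed.
Lemma Inv_step : Inv C n.+1.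
Proof.
split.
- move=> a b f Hiso; have [Vv Ir Is] := iso_Zc Hiso.
  rewrite degenS; apply: cc_base; right; split; first by case: Hiso.
  split => //; split => [i|j]; exact: (i_iso IH).
- by move=> a b f; rewrite degenS; exact: cc_valid.
- by move=> a b c g f; rewrite !degenS; exact: (@cc_comp (Zc P)).
- move=> A B T f g phi Vf Vg Vp Hc Df Dg.
  have Cp := two_step Vf Vg Vp Hc (degen_char Df) (degen_char Dg).
  case: (Cp) => Ip _ _ _; exact: (fac_degen Vp Ip Cp).
Qed.
End Step.

Lemma Inv_all (C : category) n : Inv C n.
Proof. elim: n => [|n IHn]; [exact: Inv0 | exact: Inv_step]. Qed.

Unset Implicit Arguments.

Theorem lemma3p8 (C : category) (n : nat)
  (A B T : ob (Zn n (pcat_of C)))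
  (f : hom A T) (g : hom B T) (phi : hom A B) :
  valid f -> valid g -> valid phi ->
  cmp g phi = f ->
  degen f -> degen g -> degen phi.
Proof. exact: (i_two (Inv_all C n)). Qed.
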